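(* For an implication of canonical form $(\ast)$ and an environment $\eta$, the Parametricity Condition holds if and only if the implication is $n$-ary $\eta$-valid for every $n\ge1$.
   Context: $\mathsf{Heap}$: finite partial functions $\mathsf{PosInt}\to\mathsf{Int}$; $g\sqsubseteq h$ means $h$ extends $g$; $h\cdot g$ union of disjoint heaps; componentwise on $\mathsf{Heap}^n$. $\mathsf{IRel}_n$: upward closed subsets of $\mathsf{Heap}^n$; $p*q=\{\mathbf f\cdot\mathbf g\mid\mathbf f\in p,\mathbf g\in q,\text{componentwise disjoint}\}$; $\Delta_n(X)=\{(h_1,\dots,h_n)\mid\exists f\in X.\ \forall k.\ f\sqsubseteq h_k\}$. Assertions: built from primitive assertions $P$, assertion variables, $\mathsf{true},\mathsf{false},\wedge,\vee,*$, quantifiers over integer variables. $n$-ary meaning under $\eta$ and $\rho:\mathsf{AVar}\to\mathsf{IRel}_n$: $[\![P]\!]^n=\Delta_n([\![P]\!]^{\mathrm{prim}}_\eta)$, $[\![a]\!]^n=\rho(a)$, connectives by $\mathsf{Heap}^n,\emptyset,\cap,\cup,*$, quantifiers by unions/intersections. $n$-ary $\eta$-validity of $\varphi\Rightarrow\psi$: $[\![\varphi]\!]^n_{\eta,\rho}\subseteq[\![\psi]\!]^n_{\eta,\rho}$ for all $\rho:\mathsf{AVar}\to\mathsf{IRel}_n$. Canonical form $(\ast)$: $\bigwedge_{i=1}^M\varphi_i*a_{i,1}*\cdots*a_{i,M_i}\Rightarrow\bigvee_{j=1}^N\psi_j*b_{j,1}*\cdots*b_{j,N_j}$, $M\ge1$,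 $N\ge0$, $\varphi_i,\psi_j$ free of assertion variables, every $b_{j,k}$ among the $a_{i,k}$. $V=\{a_{i,k}\}$; $\Pi(i)(c)=|\{k\mid a_{i,k}=c\}|$, $\Omega(j)(c)=|\{k\mid b_{j,k}=c\}|$; $\Pi(i)\ge\Omega(j)$ iff $\Pi(i)(c)\ge\Omega(j)(c)$ for all $c\in V$. Disjunct $j$ is empty if $N_j=0$. Parametricity Condition: for all $h,h_1,\dots,h_M\in\mathsf{Heap}$ with $h_i\sqsubseteq h$ and $h_i\in[\![\varphi_i]\!]^1_\eta$ for all $i$, either (1) there are $i,j$ with $h_i\in[\![\psi_j]\!]^1_\eta$ and $\Pi(i)\ge\Omega(j)$, or (2) there is an empty disjunct $j$ with $h\in[\![\psi_j]\!]^1_\eta$. *)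

(* Defs.v *)
From Stdlib Require Import ZArith List Vectors.Fin.
Import ListNotations.
Set Implicit Arguments.

Record Heap := mkHeap {
  hval : positive -> option Z;
  hfin : exists dom : list positive, forall p, hval p <> None -> In p dom }.

Definition hsub (g h : Heap) : Prop :=
  forall l v, hval g l = Some v -> hval h l = Some v.

Definition hdisj (g h : Heap) : Prop :=
  forall l, hval g l = None \/ hval h l = None.

Definition hunion_is (g h u : Heap) : Prop :=
  forall l, hval u l = match hval g l with Some v => Some v | None => hval h l end.

Definition tuple (n : nat) := Fin.t n -> Heap.
Definition hset (n : nat) := tuple n -> Prop.

Definition upclosed (n : nat) (p : hset n) : Prop :=
  forall f g : tuple n, p f -> (forall k, hsub (f k) (g k)) -> p g.

Definition hstar (n : nat) (p q : hset n) : hset n :=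
  fun x => exists f g, p f /\ q g /\
    forall k, hdisj (f k) (g k) /\ hunion_is (f k) (g k) (x k).

Definition Delta (n : nat) (X : Heap -> Prop) : hset n :=
  fun hs => exists f, X f /\ forall k, hsub f (hs k).

Definition ivar := nat.
Definition avar := nat.
Definition env := ivar -> Z.

Definition upd (eta : env) (x : ivar) (v : Z) : env :=
  fun y => if Nat.eqb y x then v else eta y.

Inductive assn (PA : Type) : Type :=
| APrim (P : PA)
| AVar (a : avar)
| ATrue
| AFalse
| AAnd (p q : assn PA)
| AOr (p q : assn PA)
| AStar (p q : assn PA)
| AEx (x : ivar) (p : assn PA)
| AAll (x : ivar) (p : assn PA).

Arguments ATrue {PA}.
Arguments AFalse {PA}.
Arguments AVar {PA}.

Fixpoint sem {PA : Type} (prim : env -> PA -> Heap -> Prop) (n : nat)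
  (eta : env) (rho : avar -> hset n) (p : assn PA) : hset n :=
  match p with
  | APrim P => @Delta n (prim eta P)
  | AVar a => rho a
  | ATrue => fun _ => True
  | AFalse => fun _ => False
  | AAnd p q => fun x => sem prim eta rho p x /\ sem prim eta rho q x
  | AOr p q => fun x => sem prim eta rho p x \/ sem prim eta rho q x
  | AStar p q => @hstar n (sem prim eta rho p) (sem prim eta rho q)
  | AEx y p => fun x => exists v : Z, sem prim (upd eta y v) rho p x
  | AAll y p => fun x => forall v : Z, sem prim (upd eta y v) rho p x
  end.

Fixpoint avar_free {PA : Type} (p : assn PA) : Prop :=
  match p with
  | AVar _ => False
  | APrim _ | ATrue | AFalse => True
  | AAnd p q | AOr p q | AStar p q => avar_free p /\ avar_free q
  | AEx _ p | AAll _ p => avar_free p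
  end.

Definition nvalid {PA : Type} (prim : env -> PA -> Heap -> Prop) (n : nat)
  (eta : env) (p q : assn PA) : Prop :=
  forall rho : avar -> hset n, (forall a, upclosed (rho a)) ->
    forall x, sem prim eta rho p x -> sem prim eta rho q x.

(** unary semantics of an assertion-variable-free assertion, as a set of heaps
    (rho is irrelevant; we use the empty relation, which is upward closed) *)
Definition sem1 {PA : Type} (prim : env -> PA -> Heap -> Prop) (eta : env)
  (p : assn PA) (h : Heap) : Prop :=
  sem prim eta (fun _ _ => False) p (fun _ : Fin.t 1 => h).

(** * Canonical form (star)
    A conjunct/disjunct is a pair (phi, [a_1; ...; a_k]) denoting
    phi * a_1 * ... * a_k (left associated). *)
Definition clause (PA : Type) := (assn PA * list avar)%type.

Definition clause_assn {PA : Type} (c : clause PA) : assn PA :=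
  fold_left (fun acc a => AStar acc (AVar a)) (snd c) (fst c).

Fixpoint bigand {PA : Type} (c : assn PA) (cs : list (assn PA)) : assn PA :=
  match cs with
  | [] => c
  | c' :: cs' => AAnd c (bigand c' cs')
  end.

Fixpoint bigor {PA : Type} (ds : list (assn PA)) : assn PA :=
  match ds with
  | [] => AFalse
  | [d] => d
  | d :: ds' => AOr d (bigor ds')
  end.

(** The implication of canonical form; conjuncts given as a nonempty list
    (c0 :: cs), i.e. M >= 1. *)
Definition canon_lhs {PA : Type} (c0 : clause PA) (cs : list (clause PA)) : assn PA :=
  bigand (clause_assn c0) (map clause_assn cs).
Definition canon_rhs {PA : Type} (ds : list (clause PA)) : assn PA :=
  bigor (map clause_assn ds).

Definition canonical {PA : Type} (conj : list (clause PA)) (disj : list (clause PA)) : Prop :=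
  conj <> [] /\
  (forall c, In c conj -> avar_free (fst c)) /\
  (forall d, In d disj -> avar_free (fst d)) /\
  (forall d b, In d disj -> In b (snd d) -> exists c, In c conj /\ In b (snd c)).

Definition Vset {PA : Type} (conj : list (clause PA)) : list avar :=
  flat_map (@snd _ _) conj.

Definition mult_ge {PA : Type} (V : list avar) (ci dj : clause PA) : Prop :=
  forall c, In c V ->
    count_occ Nat.eq_dec (snd dj) c <= count_occ Nat.eq_dec (snd ci) c.

(** The Parametricity Condition.  The heaps h_1..h_M are given by
    hs : nat -> Heap, h_i = hs (i-1). *)
Definition parametricity {PA : Type} (prim : env -> PA -> Heap -> Prop) (eta : env)
  (conj disj : list (clause PA)) : Prop :=
  forall (h : Heap) (hs : nat -> Heap),
    (forall i, i < length conj -> hsub (hs i) h) ->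
    (forall i c, nth_error conj i = Some c -> sem1 prim eta (fst c) (hs i)) ->
    (exists i j ci dj, nth_error conj i = Some ci /\ nth_error disj j = Some dj /\
        sem1 prim eta (fst dj) (hs i) /\ mult_ge (Vset conj) ci dj)
    \/
    (exists dj, In dj disj /\ snd dj = [] /\ sem1 prim eta (fst dj) h).

(* Main.v *)
Require Import Defs.
From Stdlib Require Import ZArith List Lia Permutation Classical ClassicalEpsilon.
Import ListNotations.
Set Implicit Arguments.

Definition xm (P : Prop) : {P} + {~ P} := excluded_middle_informative P.

Definition hrestrict (h : Heap) (P : positive -> Prop) : Heap.
Proof.
  refine (mkHeap (fun l => if xm (P l) then hval h l else None) _).
  destruct (hfin h) as [dom Hd]. exists dom. intros p Hp. apply Hd.
  destruct (xm (P p)); congruence.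
Defined.

Lemma hr_in h P l : P l -> hval (hrestrict h P) l = hval h l.
Proof. intros H. simpl. destruct (xm (P l)); tauto. Qed.
Lemma hr_out h P l : ~ P l -> hval (hrestrict h P) l = None.
Proof. intros H. simpl. destruct (xm (P l)); tauto. Qed.
Lemma hr_some h P l v : hval (hrestrict h P) l = Some v -> P l /\ hval h l = Some v.
Proof. simpl. destruct (xm (P l)); intuition congruence. Qed.

Definition hjoin (g h : Heap) : Heap.
Proof.
  refine (mkHeap (fun l => match hval g l with Some v => Some v | None => hval h l end) _).
  destruct (hfin g) as [d1 H1]. destruct (hfin h) as [d2 H2]. exists (d1 ++ d2).
  intros p Hp. apply in_or_app. destruct (hval g p) eqn:E.
  - left. apply H1. congruence.
  - right. apply H2. auto.
Defined.

Definition hminus (x g : Heap) : Heap := hrestrict x (fun l => hval g l = None).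

Lemma hsub_refl h : hsub h h.
Proof. unfold hsub; auto. Qed.
Lemma hsub_trans a b c : hsub a b -> hsub b c -> hsub a c.
Proof. unfold hsub; auto. Qed.

Definition tsub n (f g : tuple n) := forall k, hsub (f k) (g k).
Definition tdisj n (f g : tuple n) := forall k, hdisj (f k) (g k).

Lemma union_sub_l f g x : hunion_is f g x -> hsub f x.
Proof. intros U l v H. rewrite U, H. auto. Qed.
Lemma union_sub_r f g x : hdisj f g -> hunion_is f g x -> hsub g x.
Proof. intros D U l v H. rewrite U. destruct (D l); try congruence. rewrite H0. auto. Qed.

Lemma hdisj_sym f g : hdisj f g -> hdisj g f.
Proof. intros D l; destruct (D l); auto. Qed.
Lemma hdisj_mono f f' g g' : hsub f f' -> hsub g g' -> hdisj f' g' -> hdisj f g.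
Proof.
  intros H1 H2 D l. destruct (hval f l) eqn:E1; auto. destruct (hval g l) eqn:E2; auto.
  apply H1 in E1. apply H2 in E2. destruct (D l); congruence.
Qed.

Definition meet n (k0 : Fin.t n) (x : tuple n) : Heap :=
  hrestrict (x k0) (fun l => forall k, hval (x k) l = hval (x k0) l).

Lemma meet_sub n k0 (x : tuple n) k : hsub (meet k0 x) (x k).
Proof. intros l v H. apply hr_some in H. destruct H as [H1 H2]. rewrite H1. auto. Qed.
Lemma meet_glb n k0 (x : tuple n) a : (forall k, hsub a (x k)) -> hsub a (meet k0 x).
Proof.
  intros H l v Hl. unfold meet. rewrite hr_in. apply H; auto.
  intros k. rewrite (H k l v Hl), (H k0 l v Hl). auto.
Qed.
Lemma meet_mono n k0 (x y : tuple n) : tsub x y -> hsub (meet k0 x) (meet k0 y).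
Proof. intros H. apply meet_glb. intros k. eapply hsub_trans. apply meet_sub. apply H. Qed.

Lemma hstar_upclosed n (A B : hset n) : upclosed A -> upclosed (hstar A B).
Proof.
  intros UA x y [f [g [Hf [Hg Hk]]]] Hxy.
  exists (fun k => hminus (y k) (g k)), g. repeat split; auto.
  - apply (UA f). auto. intros k l v Hl. destruct (Hk k) as [D U].
    unfold hminus. rewrite hr_in. apply Hxy. apply (union_sub_l U). auto.
    destruct (D l); congruence.
  - intros l. unfold hminus. destruct (hval (g k) l) eqn:E; auto. left. apply hr_out. congruence.
  - intros l. destruct (Hk k) as [D U]. unfold hminus. destruct (hval (g k) l) eqn:E.
    + rewrite hr_out by congruence. apply Hxy. apply (union_sub_r D U). auto.
    + rewrite hr_in by auto. destruct (hval (y k) l); auto.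
Qed.

Lemma hstar_shrink n (A B : hset n) : upclosed A -> forall x, hstar A B x -> A x.
Proof.
  intros UA x [f [g [Hf [Hg Hk]]]]. apply (UA f); auto. intros k. destruct (Hk k) as [D U].
  apply (union_sub_l U).
Qed.

Lemma hstar_mono n (A A' B B' : hset n) : (forall x, A x -> A' x) -> (forall x, B x -> B' x) ->
  forall x, hstar A B x -> hstar A' B' x.
Proof. intros H1 H2 x [f [g [Hf [Hg Hk]]]]. exists f, g. auto. Qed.

Lemma hstar_comm n (A B : hset n) x : hstar A B x -> hstar B A x.
Proof.
  intros [f [g [Hf [Hg Hk]]]]. exists g, f. repeat split; auto.
  - apply hdisj_sym. apply Hk.
  - intros l. destruct (Hk k) as [D U]. rewrite U. destruct (D l) as [E|E]; rewrite E.
    + destruct (hval (g k) l); auto.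
    + destruct (hval (f k) l); auto.
Qed.

Lemma hstar_assoc n (A B C : hset n) x : hstar (hstar A B) C x -> hstar A (hstar B C) x.
Proof.
  intros [fg [h [[f [g [Hf [Hg Hk1]]]] [Hh Hk2]]]].
  exists f, (fun k => hjoin (g k) (h k)). repeat split; auto.
  - exists g, h. split; [auto|split;[auto|]]. intros k; split.
    + destruct (Hk1 k) as [D1 U1]. destruct (Hk2 k) as [D2 U2].
      eapply hdisj_mono. apply (union_sub_r D1 U1). apply hsub_refl. auto.
    + intros l. reflexivity.
  - intros l. destruct (Hk1 k) as [D1 U1]. destruct (Hk2 k) as [D2 U2].
    destruct (hval (f k) l) eqn:E; auto. right. simpl.
    destruct (D1 l); try congruence. rewrite H.
    destruct (D2 l); auto. rewrite U1, E in H0. congruence.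
  - intros l. destruct (Hk1 k) as [D1 U1]. destruct (Hk2 k) as [D2 U2].
    rewrite U2, U1. simpl. destruct (hval (f k) l); auto.
Qed.

Lemma hstar_assoc' n (A B C : hset n) x : hstar A (hstar B C) x -> hstar (hstar A B) C x.
Proof.
  intros H. apply hstar_comm in H. apply hstar_assoc in H. apply hstar_comm in H.
  apply hstar_assoc in H. apply hstar_comm in H.
  eapply hstar_mono; [| | exact H]; intros; auto; apply hstar_comm; auto.
Qed.

Lemma sem_upclosed {PA} (prim : env -> PA -> Heap -> Prop) {p : assn PA} :
  avar_free p -> forall n eta (rho : avar -> hset n), upclosed (sem prim eta rho p).
Proof.
  induction p; simpl; intros Hf n eta rho; try contradiction.
  - intros x y [f [Hf1 Hf2]] Hxy. exists f. split; auto. intros k; eapply hsub_trans; eauto.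
  - intros x y _ _; auto.
  - intros x y [].
  - destruct Hf as [F1 F2]. intros x y [H1 H2] Hxy. split.
    eapply (IHp1 F1); eauto. eapply (IHp2 F2); eauto.
  - destruct Hf as [F1 F2]. intros x y [H1|H2] Hxy. left; eapply (IHp1 F1); eauto.
    right; eapply (IHp2 F2); eauto.
  - destruct Hf as [F1 F2]. apply hstar_upclosed. apply IHp1; auto.
  - intros t u [v H] Hxy. exists v. eapply IHp; eauto.
  - intros t u H Hxy v. eapply IHp; eauto.
Qed.

Lemma fin1 (k : Fin.t 1) : k = Fin.F1.
Proof.
  apply (Fin.caseS' k (fun k => k = Fin.F1)). reflexivity. intros p. inversion p.
Qed.

Lemma sem1_up {PA} (prim : env -> PA -> Heap -> Prop) (p : assn PA) eta a b :
  avar_free p -> sem1 prim eta p a -> hsub a b -> sem1 prim eta p b.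
Proof.
  intros F H S. unfold sem1 in *. eapply (sem_upclosed prim F); eauto.
Qed.

Lemma meet_const n k0 (a : Heap) : hsub a (meet k0 (fun _ : Fin.t n => a)).
Proof. apply meet_glb. intros; apply hsub_refl. Qed.

Lemma delta {PA} (prim : env -> PA -> Heap -> Prop) {p : assn PA} : avar_free p ->
  forall n (k0 : Fin.t n) eta (rho : avar -> hset n) x, sem prim eta rho p x <-> sem1 prim eta p (meet k0 x).
Proof.
  induction p as [P|a| | |p1 IHp1 p2 IHp2|p1 IHp1 p2 IHp2|p1 IHp1 p2 IHp2|y p IHp|y p IHp]; intros Hf n k0 eta rho x; simpl in Hf; try contradiction.
  - unfold sem1; simpl. unfold Delta. split.
    + intros [f [H1 H2]]. exists f. split; auto. intros _. apply meet_glb. auto.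
    + intros [f [H1 H2]]. exists f. split; auto. intros k. eapply hsub_trans.
      apply (H2 Fin.F1). apply meet_sub.
  - unfold sem1; simpl; tauto.
  - unfold sem1; simpl; tauto.
  - destruct Hf as [F1 F2]. unfold sem1 in *; simpl.
    rewrite (IHp1 F1 n k0), (IHp2 F2 n k0). tauto.
  - destruct Hf as [F1 F2]. unfold sem1 in *; simpl.
    rewrite (IHp1 F1 n k0), (IHp2 F2 n k0). tauto.
  - destruct Hf as [F1 F2]. split.
    + intros [f [g [Hf [Hg Hk]]]].
      apply (IHp1 F1 n k0) in Hf. apply (IHp2 F2 n k0) in Hg.
      unfold sem1; simpl.
      exists (fun _ => meet k0 f), (fun _ => hminus (meet k0 x) (meet k0 f)).
      split; [exact Hf|]. split.
      * eapply sem1_up; eauto. intros l v Hl. unfold hminus. rewrite hr_in.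
        -- apply (meet_glb k0 x (a:=meet k0 g)); [|exact Hl]. intros k. destruct (Hk k) as [D U].
           eapply hsub_trans. apply meet_sub. apply (union_sub_r D U).
        -- destruct (hval (meet k0 f) l) eqn:E; auto.
           apply (meet_sub k0 f k0) in E. apply (meet_sub k0 g k0) in Hl.
           destruct (Hk k0) as [D U]. destruct (D l); congruence.
      * intros _. split.
        -- intros l. destruct (hval (meet k0 f) l) eqn:E; auto. right.
           unfold hminus. apply hr_out. congruence.
        -- intros l. destruct (hval (meet k0 f) l) eqn:E.
           ++ assert (HM : hsub (meet k0 f) (meet k0 x)).
              { apply meet_mono. intros k. destruct (Hk k) as [D U]. apply (union_sub_l U). }
              rewrite (HM l z E); reflexivity.
           ++ unfold hminus. rewrite hr_in; auto.
    + unfold sem1; simpl. intros [F [G [HF [HG Hk]]]].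
      destruct (Hk Fin.F1) as [D U].
      set (a := F Fin.F1) in *. set (b := G Fin.F1) in *.
      assert (Ha : sem1 prim eta p1 a).
      { unfold sem1. eapply (sem_upclosed prim F1); eauto. intros k. rewrite (fin1 k). apply hsub_refl. }
      assert (Hb : sem1 prim eta p2 b).
      { unfold sem1. eapply (sem_upclosed prim F2); eauto. intros k. rewrite (fin1 k). apply hsub_refl. }
      exists (fun _ => a), (fun k => hminus (x k) a). split; [|split].
      * apply (IHp1 F1 n k0). eapply sem1_up; eauto. apply meet_const.
      * apply (IHp2 F2 n k0). eapply sem1_up; eauto. apply meet_glb. intros k l v Hl.
        unfold hminus. rewrite hr_in.
        -- apply (meet_sub k0 x k). rewrite U. destruct (D l) as [E|E]; [rewrite E; exact Hl| congruence].
        -- destruct (D l); congruence.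
      * intros k. split.
        -- intros l. destruct (hval a l) eqn:E; auto. right. unfold hminus. apply hr_out. congruence.
        -- intros l. destruct (hval a l) eqn:E.
           ++ apply (meet_sub k0 x k). rewrite U, E. auto.
           ++ unfold hminus. rewrite hr_in; auto.
  - unfold sem1 in *; simpl. split; intros [v H]; exists v; apply (IHp Hf n k0) in H || apply (IHp Hf n k0); auto.
  - unfold sem1 in *; simpl. split; intros H v; specialize (H v); apply (IHp Hf n k0) in H || apply (IHp Hf n k0); auto.
Qed.

Definition FL n (rho : avar -> hset n) (A : hset n) (l : list avar) : hset n :=
  fold_left (fun acc a => hstar acc (rho a)) l A.

Lemma sem_fold {PA} (prim : env -> PA -> Heap -> Prop) n eta (rho : avar -> hset n) (l : list avar) :
  forall (p : assn PA) (A : hset n), (forall y, sem prim eta rho p y <-> A y) ->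
  forall x, sem prim eta rho (fold_left (fun acc a => AStar acc (AVar a)) l p) x <-> FL rho A l x.
Proof.
  induction l as [|a l IH]; simpl; intros p A H x; auto.
  apply IH. intros y. simpl. split; apply hstar_mono; firstorder.
Qed.

Lemma sem_clause {PA} (prim : env -> PA -> Heap -> Prop) n eta (rho : avar -> hset n) (c : clause PA) x :
  sem prim eta rho (clause_assn c) x <-> FL rho (sem prim eta rho (fst c)) (snd c) x.
Proof. unfold clause_assn. apply sem_fold. tauto. Qed.

Lemma FL_mono n (rho : avar -> hset n) l : forall (A A' : hset n), (forall x, A x -> A' x) ->
  forall x, FL rho A l x -> FL rho A' l x.
Proof.
  induction l as [|a l IH]; simpl; intros A A' H x; auto.
  apply IH. intros y. apply hstar_mono; auto.
Qed.

Lemma FL_upclosed n (rho : avar -> hset n) l : forall (A : hset n), upclosed A -> upclosed (FL rho A l).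
Proof.
  induction l as [|a l IH]; simpl; intros A H; auto. apply IH. apply hstar_upclosed; auto.
Qed.

Lemma FL_shrink n (rho : avar -> hset n) l : forall (A : hset n), upclosed A -> forall x, FL rho A l x -> A x.
Proof.
  induction l as [|a l IH]; simpl; intros A H x Hx; auto.
  apply IH in Hx. eapply hstar_shrink; eauto. apply hstar_upclosed; auto.
Qed.

Lemma FL_perm n (rho : avar -> hset n) l l' : Permutation l l' -> forall (A : hset n) x, FL rho A l x -> FL rho A l' x.
Proof.
  induction 1; simpl; intros A z Hz; auto.
  - apply FL_mono with (A := hstar (hstar A (rho y)) (rho x)); auto.
    intros w Hw. apply hstar_assoc'. apply hstar_assoc in Hw.
    eapply hstar_mono; [| |exact Hw]; auto. intros; apply hstar_comm; auto.
Qed.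

Lemma FL_app n (rho : avar -> hset n) A l1 l2 : FL rho A (l1 ++ l2) = FL rho (FL rho A l1) l2.
Proof. unfold FL. rewrite fold_left_app. reflexivity. Qed.

Lemma FL_drop n (rho : avar -> hset n) (A : hset n) l1 l2 x : upclosed A -> FL rho A (l1 ++ l2) x -> FL rho A l1 x.
Proof.
  intros H. rewrite FL_app. apply FL_shrink. apply FL_upclosed; auto.
Qed.

Lemma count_perm (bs : list avar) : forall as_ : list avar,
  (forall c, count_occ Nat.eq_dec bs c <= count_occ Nat.eq_dec as_ c) -> exists rest, Permutation as_ (bs ++ rest).
Proof.
  induction bs as [|b bs IH]; intros as_ H.
  - exists as_. simpl. apply Permutation_refl.
  - assert (Hin : In b as_).
    { apply (count_occ_In Nat.eq_dec). specialize (H b). simpl in H.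
      destruct (Nat.eq_dec b b); [lia|congruence]. }
    apply in_split in Hin. destruct Hin as [a1 [a2 E]]. subst.
    destruct (IH (a1 ++ a2)) as [rest Hr].
    { intros c. specialize (H c). rewrite count_occ_app in *. simpl in H.
      destruct (Nat.eq_dec b c); lia. }
    exists rest. simpl. eapply Permutation_trans.
    apply Permutation_sym. apply Permutation_middle. apply perm_skip. auto.
Qed.

Lemma tsub_refl n (f : tuple n) : tsub f f.
Proof. intros k; apply hsub_refl. Qed.
Lemma tsub_trans n (f g h : tuple n) : tsub f g -> tsub g h -> tsub f h.
Proof. intros H1 H2 k. eapply hsub_trans; eauto. Qed.

Lemma E_upclosed n (f : tuple n) : upclosed (fun y => tsub f y).
Proof. intros a b H1 H2. eapply tsub_trans; eauto. Qed.

Lemma FL_pin n (rho : avar -> hset n) l : forall (A : hset n) x, FL rho A l x ->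
  exists f, A f /\ FL rho (fun y => tsub f y) l x.
Proof.
  induction l as [|a l IH]; simpl; intros A x Hx.
  - exists x. split; auto. apply tsub_refl.
  - apply IH in Hx. destruct Hx as [f' [Hf' Hx]].
    destruct Hf' as [f [g [Hf [Hg Hk]]]]. exists f. split; auto.
    eapply FL_mono; [|exact Hx]. intros y Hy.
    apply (hstar_upclosed (A := fun y => tsub f y) (B := rho a)) with (f := f'); auto.
    apply E_upclosed. exists f, g. split; [apply tsub_refl|]. auto.
Qed.

Lemma hminus_union g x : hsub g x -> hdisj (hminus x g) g /\ hunion_is (hminus x g) g x.
Proof.
  intros S. split.
  - intros l. destruct (hval g l) eqn:E; auto. left. unfold hminus. apply hr_out. congruence.
  - intros l. unfold hminus. destruct (hval g l) eqn:E.
    + rewrite hr_out by congruence. apply S in E. auto.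
    + rewrite hr_in by auto. destruct (hval x l); auto.
Qed.

Lemma hminus_sub f g x : hsub f x -> hdisj f g -> hsub f (hminus x g).
Proof.
  intros S D l v H. unfold hminus. rewrite hr_in. apply S; auto. destruct (D l); congruence.
Qed.

Lemma FL_elim n (rho : avar -> hset n) l : forall (A : hset n) x, FL rho A l x ->
  exists f (gs : nat -> tuple n), A f /\ tsub f x /\
    (forall i, i < length l -> rho (nth i l 0) (gs i) /\ tsub (gs i) x /\ tdisj f (gs i)) /\
    (forall i j, i < j < length l -> tdisj (gs i) (gs j)).
Proof.
  induction l as [|a l IH]; simpl; intros A x Hx.
  - exists x, (fun _ => x). split; auto. split. apply tsub_refl. split; intros; lia.
  - apply IH in Hx. destruct Hx as [f' [gs' [Hf' [Sf' [Hgs Hpd]]]]].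
    destruct Hf' as [f [g [Hf [Hg Hk]]]].
    assert (Sf : tsub f f'). { intros k. destruct (Hk k) as [D U]. apply (union_sub_l U). }
    assert (Sg : tsub g f'). { intros k. destruct (Hk k) as [D U]. apply (union_sub_r D U). }
    exists f, (fun i => match i with 0 => g | S i => gs' i end).
    split; auto. split. eapply tsub_trans; eauto. split.
    + intros [|i] Hi; simpl.
      * split; auto. split. eapply tsub_trans; eauto. intros k; apply Hk.
      * destruct (Hgs i) as [H1 [H2 H3]]; [lia|]. split; auto. split; auto.
        intros k. eapply hdisj_mono; [apply Sf|apply hsub_refl|apply H3].
    + intros [|i] [|j] Hij; try lia.
      * destruct (Hgs j) as [H1 [H2 H3]]; [lia|].
        intros k. eapply hdisj_mono; [apply Sg|apply hsub_refl|apply H3].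
      * apply Hpd. lia.
Qed.

Lemma FL_intro n (rho : avar -> hset n) (A : hset n) f (gs : nat -> tuple n) l : forall x,
  upclosed A -> A f -> tsub f x ->
  (forall i, i < length l -> rho (nth i l 0) (gs i) /\ tsub (gs i) x /\ tdisj f (gs i)) ->
  (forall i j, i < j < length l -> tdisj (gs i) (gs j)) ->
  (forall k p, hval (x k) p <> None -> hval (f k) p <> None \/ exists i, i < length l /\ hval (gs i k) p <> None) ->
  FL rho A l x.
Proof.
  induction l as [|a l IH] using rev_ind; intros x UA Hf Sf Hgs Hpd Hcov.
  - simpl. apply (UA f); auto.
  - rewrite FL_app. simpl.
    set (g := gs (length l)).
    assert (Hlen : length (l ++ [a]) = S (length l)) by (rewrite length_app; simpl; lia).
    rewrite Hlen in Hgs, Hpd, Hcov.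
    destruct (Hgs (length l)) as [Hg1 [Hg2 Hg3]]; [lia|].
    exists (fun k => hminus (x k) (g k)), g. split; [|split].
    + apply IH; auto.
      * intros k. apply hminus_sub; auto.
      * intros i Hi. destruct (Hgs i) as [H1 [H2 H3]]; [lia|].
        rewrite app_nth1 in H1 by lia. split; auto. split; auto.
        intros k. apply hminus_sub; auto. apply Hpd. lia.
      * intros i j Hij. apply Hpd. lia.
      * intros k p Hp. unfold hminus in Hp.
        destruct (xm (hval (g k) p = None)) as [Hn|Hn]; [|rewrite hr_out in Hp; congruence].
        rewrite hr_in in Hp by auto.
        destruct (Hcov k p Hp) as [H|[i [Hi H]]]; auto. right. exists i. split; auto.
        destruct (Nat.eq_dec i (length l)); [subst; unfold g in Hn; congruence|lia].
    + rewrite app_nth2 in Hg1 by lia. rewrite Nat.sub_diag in Hg1. simpl in Hg1. exact Hg1.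
    + intros k. apply hminus_union. apply Hg2.
Qed.

Lemma sem_bigand {PA} (prim : env -> PA -> Heap -> Prop) n eta (rho : avar -> hset n) cs :
  forall c x, sem prim eta rho (bigand c cs) x <-> sem prim eta rho c x /\ forall c', In c' cs -> sem prim eta rho c' x.
Proof.
  induction cs as [|c' cs IH]; simpl; intros c x.
  - tauto.
  - rewrite IH. split.
    + intros [H1 [H2 H3]]. split; auto. intros c'' [<-|H]; auto.
    + intros [H1 H2]. split; auto.
Qed.

Lemma sem_bigor {PA} (prim : env -> PA -> Heap -> Prop) n eta (rho : avar -> hset n) ds :
  forall x, sem prim eta rho (bigor ds) x <-> exists d, In d ds /\ sem prim eta rho d x.
Proof.
  induction ds as [|d ds IH]; intros x.
  - simpl. split; [tauto|]. intros [d [[] _]].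
  - destruct ds as [|d' ds'].
    + simpl. split. intros H; exists d; auto. intros [d0 [[<-|[]] H]]; auto.
    + change (bigor (d :: d' :: ds')) with (AOr d (bigor (d' :: ds'))). simpl sem. rewrite IH. split.
      * intros [H|[d0 [H1 H2]]]. exists d; simpl; auto. exists d0. simpl in *; auto.
      * intros [d0 [[<-|H1] H2]]; auto. right. exists d0; auto.
Qed.

Lemma lhs_iff {PA} (prim : env -> PA -> Heap -> Prop) n eta (rho : avar -> hset n) c0 cs x :
  sem prim eta rho (canon_lhs c0 cs) x <-> forall c, In c (c0 :: cs) -> sem prim eta rho (clause_assn c) x.
Proof.
  unfold canon_lhs. rewrite sem_bigand. split.
  - intros [H1 H2] c [<-|H]; auto. apply H2. apply in_map; auto.
  - intros H. split. apply H; simpl; auto. intros c' Hc. apply in_map_iff in Hc.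
    destruct Hc as [c [<- Hc]]. apply H. simpl; auto.
Qed.

Lemma rhs_iff {PA} (prim : env -> PA -> Heap -> Prop) n eta (rho : avar -> hset n) ds x :
  sem prim eta rho (canon_rhs ds) x <-> exists d, In d ds /\ sem prim eta rho (clause_assn d) x.
Proof.
  unfold canon_rhs. rewrite sem_bigor. split.
  - intros [d [Hd H]]. apply in_map_iff in Hd. destruct Hd as [c [<- Hc]]. eauto.
  - intros [d [Hd H]]. exists (clause_assn d). split; auto. apply in_map; auto.
Qed.

Lemma dir1 {PA} (prim : env -> PA -> Heap -> Prop) eta (c0 : clause PA) cs ds :
  canonical (c0 :: cs) ds -> parametricity prim eta (c0 :: cs) ds ->
  forall n, 1 <= n -> nvalid prim n eta (canon_lhs c0 cs) (canon_rhs ds).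
Proof.
  intros [_ [Hcf [Hdf Hbv]]] Hpar n Hn rho Hrho x Hx.
  destruct n as [|n']; [lia|]. set (k0 := @Fin.F1 n').
  rewrite lhs_iff in Hx.
  assert (Hex : forall i, exists h' : Heap, forall c, nth_error (c0 :: cs) i = Some c ->
     exists f, sem prim eta rho (fst c) f /\ FL rho (fun y => tsub f y) (snd c) x /\ h' = meet k0 f).
  { intros i. destruct (nth_error (c0 :: cs) i) as [c|] eqn:E.
    - assert (H := Hx c (nth_error_In _ _ E)). rewrite sem_clause in H.
      apply FL_pin in H. destruct H as [f [H1 H2]]. exists (meet k0 f).
      intros c' E'. injection E' as <-. eauto.
    - exists (meet k0 x). intros c E'. congruence. }
  set (hs := fun i => proj1_sig (constructive_indefinite_description _ (Hex i))).
  assert (Hhs : forall i c, nth_error (c0 :: cs) i = Some c ->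
     exists f, sem prim eta rho (fst c) f /\ FL rho (fun y => tsub f y) (snd c) x /\ hs i = meet k0 f).
  { intros i c E. unfold hs. destruct (constructive_indefinite_description _ (Hex i)) as [h' Hh']. simpl. auto. }
  destruct (Hpar (meet k0 x) hs) as [[i [j [ci [dj [Ei [Ej [Hs Hm]]]]]]] | [dj [Hdj [Hsn Hs]]]].
  - intros i Hi. destruct (nth_error (c0 :: cs) i) as [c|] eqn:E.
    + destruct (Hhs i c E) as [f [_ [H2 ->]]]. apply meet_mono.
      apply (FL_shrink rho (snd c) (@E_upclosed _ f)) in H2. auto.
    + apply nth_error_None in E. lia.
  - intros i c E. destruct (Hhs i c E) as [f [H1 [_ ->]]].
    apply (delta prim (Hcf c (nth_error_In _ _ E)) k0) in H1. auto.
  - apply rhs_iff. exists dj. split. eapply nth_error_In; eauto.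
    destruct (Hhs i ci Ei) as [f [_ [H2 Hf]]]. rewrite Hf in Hs.
    assert (Fd : avar_free (fst dj)) by (apply Hdf; eapply nth_error_In; eauto).
    apply (delta prim Fd k0 eta rho) in Hs.
    apply sem_clause.
    assert (H3 : FL rho (sem prim eta rho (fst dj)) (snd ci) x).
    { eapply FL_mono; [|exact H2]. intros y Hy. eapply (sem_upclosed prim Fd); eauto. }
    destruct (count_perm (snd dj) (snd ci)) as [rest Hr].
    { intros c. destruct (in_dec Nat.eq_dec c (snd dj)) as [Hin|Hnin].
      - apply Hm. destruct (Hbv dj c (nth_error_In _ _ Ej) Hin) as [c' [Hc' Hc'']].
        unfold Vset. apply in_flat_map. eauto.
      - rewrite (count_occ_not_In Nat.eq_dec) in Hnin. rewrite Hnin. lia. }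
    eapply FL_drop. apply (sem_upclosed prim Fd). eapply FL_perm; eauto.
  - apply rhs_iff. exists dj. split; auto. apply sem_clause. rewrite Hsn. simpl.
    apply (delta prim (Hdf dj Hdj) k0). auto.
Qed.

Lemma count_idx_gen (c : nat) (l : list nat) : forall d : list nat,
  length (filter (fun k => Nat.eqb (nth k (d ++ l) 0) c) (seq (length d) (length l))) = count_occ Nat.eq_dec l c.
Proof.
  induction l as [|a l IH]; intros d; simpl; auto.
  rewrite nth_middle. specialize (IH (d ++ [a])). rewrite <- app_assoc in IH. simpl in IH.
  rewrite length_app in IH. simpl in IH. rewrite Nat.add_1_r in IH.
  destruct (Nat.eqb a c) eqn:E; destruct (Nat.eq_dec a c); subst; simpl.
  - rewrite IH. auto.
  - apply Nat.eqb_eq in E. congruence.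
  - rewrite Nat.eqb_refl in E. congruence.
  - auto.
Qed.

Lemma count_idx (c : nat) (l : list nat) :
  count_occ Nat.eq_dec l c = length (filter (fun k => Nat.eqb (nth k l 0) c) (seq 0 (length l))).
Proof. rewrite <- (count_idx_gen c l []). reflexivity. Qed.

Lemma count_inj (L1 L2 : list nat) (g : nat -> nat) :
  (forall l, l < length L1 -> g l < length L2 /\ nth (g l) L2 0 = nth l L1 0) ->
  (forall l l', l < length L1 -> l' < length L1 -> g l = g l' -> l = l') ->
  forall c, count_occ Nat.eq_dec L1 c <= count_occ Nat.eq_dec L2 c.
Proof.
  intros H1 H2 c. rewrite !count_idx.
  rewrite <- (length_map g).
  apply NoDup_incl_length.
  - apply NoDup_map_NoDup_ForallPairs.
    + intros a b Ha Hb. apply filter_In in Ha. apply filter_In in Hb.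
      destruct Ha as [Ha _]. destruct Hb as [Hb _]. apply in_seq in Ha. apply in_seq in Hb.
      apply H2; lia.
    + apply NoDup_filter. apply seq_NoDup.
  - intros y Hy. apply in_map_iff in Hy. destruct Hy as [a [<- Ha]].
    apply filter_In in Ha. destruct Ha as [Ha Hc]. apply in_seq in Ha.
    destruct (H1 a) as [H3 H4]; [lia|].
    apply filter_In. split. apply in_seq. lia. rewrite H4. auto.
Qed.
From Stdlib Require Import Cantor.
Unset Implicit Arguments.

Definition occ := (nat * nat)%type.
Definition Occ (M : nat) (len : nat -> nat) (q : occ) : Prop := fst q < M /\ snd q < len (fst q).
Definition occlist (M : nat) (len : nat -> nat) : list occ :=
  flat_map (fun i => map (fun k => (i,k)) (seq 0 (len i))) (seq 0 M).
Lemma occlist_In M len q : In q (occlist M len) <-> Occ M len q.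
Proof.
  unfold occlist, Occ. rewrite in_flat_map. split.
  - intros [i [Hi Hq]]. apply in_map_iff in Hq. destruct Hq as [k [<- Hk]].
    apply in_seq in Hi. apply in_seq in Hk. simpl. lia.
  - destruct q as [i k]. simpl. intros [H1 H2]. exists i. split. apply in_seq; lia.
    apply in_map_iff. exists k. split; auto. apply in_seq; lia.
Qed.

Definition Loc (B : nat) (p q : occ) : positive :=
  Pos.of_succ_nat (B + Cantor.to_nat (Cantor.to_nat p, Cantor.to_nat q)).

Lemma Loc_inj B p q p' q' : Loc B p q = Loc B p' q' -> p = p' /\ q = q'.
Proof.
  unfold Loc. intros H. apply SuccNat2Pos.inj in H.
  assert (H' : Cantor.to_nat (Cantor.to_nat p, Cantor.to_nat q) = Cantor.to_nat (Cantor.to_nat p', Cantor.to_nat q')) by lia.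
  apply (f_equal Cantor.of_nat) in H'. rewrite !Cantor.cancel_of_to in H'.
  injection H' as H1 H2.
  apply (f_equal Cantor.of_nat) in H1. apply (f_equal Cantor.of_nat) in H2.
  rewrite !Cantor.cancel_of_to in H1, H2. auto.
Qed.

Lemma Loc_big B p q : B < Pos.to_nat (Loc B p q).
Proof. unfold Loc. rewrite SuccNat2Pos.id_succ. lia. Qed.

Definition LocsH (B M : nat) (len : nat -> nat) (p : occ) : Heap.
Proof.
  refine (mkHeap (fun l => if xm (exists q, Occ M len q /\ l = Loc B p q) then Some 0%Z else None) _).
  exists (map (Loc B p) (occlist M len)). intros l Hl.
  destruct (xm (exists q, Occ M len q /\ l = Loc B p q)) as [[q [Hq ->]]|]; [|congruence].
  apply in_map. apply occlist_In; auto.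
Defined.

Definition comp {n} (M : nat) (len : nat -> nat) (c : Fin.t n) : option occ :=
  match proj1_sig (Fin.to_nat c) with
  | 0 => None
  | S w => if xm (Occ M len (Cantor.of_nat w)) then Some (Cantor.of_nat w) else None
  end.

Definition X B M len (h : Heap) (o : option occ) : Heap :=
  match o with None => h | Some p => hjoin h (LocsH B M len p) end.

Definition memG B M len (h : Heap) (hs : nat -> Heap) (q : occ) (o : option occ) (l : positive) : Prop :=
  match o with
  | None => False
  | Some p => (q = p /\ hval h l <> None /\ hval (hs (fst p)) l = None) \/
      (exists q', Occ M len q' /\ l = Loc B p q' /\ (q' = q \/ q = p) /\ (p = q' \/ fst p <> fst q'))
  end.

Definition Gh B M len h hs (q : occ) (o : option occ) : Heap :=
  hrestrict (X B M len h o) (memG B M len h hs q o).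

Definition Fh B M len h hs (i : nat) (o : option occ) : Heap :=
  hrestrict (X B M len h o) (fun l => ~ exists q, Occ M len q /\ fst q = i /\ memG B M len h hs q o l /\ hval (X B M len h o) l <> None).

Definition hbound (B : nat) (h : Heap) := forall l, hval h l <> None -> Pos.to_nat l < B.

Lemma h_not_loc B h l p q : hbound B h -> hval h l <> None -> l <> Loc B p q.
Proof. intros HB H E. apply HB in H. subst. pose proof (Loc_big B p q). lia. Qed.

Lemma loc_not_h B h p q : hbound B h -> hval h (Loc B p q) = None.
Proof.
  intros HB. destruct (hval h (Loc B p q)) eqn:E; auto. exfalso.
  apply (h_not_loc B h (Loc B p q) p q HB); [congruence|reflexivity].
Qed.

Lemma X_h B M len h o l v : hval h l = Some v -> hval (X B M len h o) l = Some v.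
Proof. intros H. destruct o; simpl; rewrite H; auto. Qed.

Lemma X_loc B M len h p q : hbound B h -> Occ M len q -> hval (X B M len h (Some p)) (Loc B p q) = Some 0%Z.
Proof.
  intros HB Hq. simpl. rewrite loc_not_h; auto.
  destruct (xm (exists q0, Occ M len q0 /\ Loc B p q = Loc B p q0)) as [_|n0]; auto.
  exfalso; apply n0; eauto.
Qed.

Lemma hr_sub h P : hsub (hrestrict h P) h.
Proof. intros l v H. apply hr_some in H. tauto. Qed.

Lemma Gh_disj B M len h hs q1 q2 o : hbound B h -> fst q1 = fst q2 -> q1 <> q2 ->
  hdisj (Gh B M len h hs q1 o) (Gh B M len h hs q2 o).
Proof.
  intros HB Hf Hne l. unfold Gh.
  destruct (xm (memG B M len h hs q1 o l)) as [m1|m1]; [|left; apply hr_out; auto].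
  destruct (xm (memG B M len h hs q2 o l)) as [m2|m2]; [|right; apply hr_out; auto].
  exfalso. destruct o as [p|]; [|destruct m1]. simpl in m1, m2.
  destruct m1 as [[E1 [H1 _]]|[q1' [O1 [L1 [R1 S1]]]]];
  destruct m2 as [[E2 [H2 _]]|[q2' [O2 [L2 [R2 S2]]]]].
  - congruence.
  - exact (h_not_loc B h l p q2' HB H1 L2).
  - exact (h_not_loc B h l p q1' HB H2 L1).
  - rewrite L1 in L2. apply Loc_inj in L2. destruct L2 as [_ E0].
    destruct R1 as [E1|E1]; destruct R2 as [E2|E2]; destruct S1 as [E3|E3]; congruence.
Qed.

Lemma FG_disj B M len h hs q o i : fst q = i -> Occ M len q -> hdisj (Fh B M len h hs i o) (Gh B M len h hs q o).
Proof.
  intros Hi Oq l. unfold Fh, Gh.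
  destruct (xm (memG B M len h hs q o l)) as [m|m]; [|right; apply hr_out; auto].
  destruct (hval (X B M len h o) l) eqn:E; [|right; rewrite hr_in; auto].
  left. apply hr_out. intros H; apply H. exists q. split; [exact Oq|]. split; [exact Hi|]. split; [exact m|]. congruence.
Qed.

Lemma F_hs B M len h hs i o : hbound B h -> hsub (hs i) h -> hsub (hs i) (Fh B M len h hs i o).
Proof.
  intros HB Hs l v Hl. unfold Fh. rewrite hr_in.
  - apply X_h. apply Hs; auto.
  - intros [q [Oq [Hq [m _]]]]. destruct o as [p|]; [|destruct m]. simpl in m.
    destruct m as [[E [_ Hn]]|[q' [_ [L _]]]].
    + subst. congruence.
    + eapply h_not_loc; eauto. rewrite (Hs l v Hl). congruence.
Qed.

Lemma F_cover B M len h hs i o l : hval (X B M len h o) l <> None ->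
  hval (Fh B M len h hs i o) l <> None \/ exists k, k < len i /\ hval (Gh B M len h hs (i,k) o) l <> None.
Proof.
  intros H. destruct (xm (exists q, Occ M len q /\ fst q = i /\ memG B M len h hs q o l /\ hval (X B M len h o) l <> None)) as [[q [[O1 O2] [Hq [m Hx]]]]|N].
  - right. destruct q as [i' k]. cbn [fst snd] in O1, O2, Hq. subst i'. exists k. split; auto.
    unfold Gh. rewrite hr_in; auto.
  - left. unfold Fh. rewrite hr_in; auto.
Qed.

Lemma comp_of M len n q (H : S (Cantor.to_nat q) < n) : Occ M len q -> comp M len (Fin.of_nat_lt H) = Some q.
Proof.
  intros O. unfold comp. rewrite Fin.to_nat_of_nat. simpl. rewrite Cantor.cancel_of_to.
  destruct (xm (Occ M len q)); tauto.
Qed.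

Lemma comp_F1 M len N : comp M len (@Fin.F1 N) = None.
Proof. reflexivity. Qed.

Lemma G_loc B M len h hs q q' : hbound B h -> Occ M len q -> Occ M len q' -> (q = q' \/ fst q <> fst q') ->
  hval (Gh B M len h hs q (Some q)) (Loc B q q') = Some 0%Z /\ hval (Gh B M len h hs q' (Some q)) (Loc B q q') = Some 0%Z.
Proof.
  intros HB O O' R. unfold Gh. split; rewrite hr_in; try (apply X_loc; auto); simpl; right; exists q'; auto.
Qed.

Lemma G_h B M len h hs q l v : hval h l = Some v -> hval (hs (fst q)) l = None ->
  hval (Gh B M len h hs q (Some q)) l = Some v.
Proof.
  intros H1 H2. unfold Gh. rewrite hr_in. apply X_h; auto. simpl. left. split; auto. split; congruence.
Qed.

Lemma dir2 {PA} (prim : env -> PA -> Heap -> Prop) eta (c0 : clause PA) cs ds :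
  canonical (c0 :: cs) ds ->
  (forall n, 1 <= n -> nvalid prim n eta (canon_lhs c0 cs) (canon_rhs ds)) ->
  parametricity prim eta (c0 :: cs) ds.
Proof.
  intros [_ [Hcf [Hdf Hbv]]] Hval h hs Hsub Hphi.
  set (M := length (c0 :: cs)).
  set (len := fun i => length (snd (nth i (c0 :: cs) c0))).
  destruct (hfin h) as [dom Hdom].
  set (B := S (list_max (map Pos.to_nat dom))).
  assert (HB : hbound B h).
  { intros l Hl. apply Hdom in Hl.
    pose proof (proj1 (list_max_le (map Pos.to_nat dom) _) (le_n _)) as F.
    rewrite Forall_forall in F. specialize (F (Pos.to_nat l) (in_map _ _ _ Hl)). unfold B. lia. }
  set (N := S (list_max (map Cantor.to_nat (occlist M len)))).
  assert (HN : forall q, Occ M len q -> S (Cantor.to_nat q) < S N).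
  { intros q Hq. apply occlist_In in Hq.
    pose proof (proj1 (list_max_le (map Cantor.to_nat (occlist M len)) _) (le_n _)) as F.
    rewrite Forall_forall in F. specialize (F (Cantor.to_nat q) (in_map _ _ _ Hq)). unfold N. lia. }
  set (x := fun c : Fin.t (S N) => X B M len h (comp M len c)).
  set (G := fun q (c : Fin.t (S N)) => Gh B M len h hs q (comp M len c)).
  set (F := fun i (c : Fin.t (S N)) => Fh B M len h hs i (comp M len c)).
  set (var := fun q : occ => nth (snd q) (snd (nth (fst q) (c0 :: cs) c0)) 0).
  set (rho := fun (a : avar) (g : tuple (S N)) => exists q, Occ M len q /\ var q = a /\ tsub (G q) g).
  assert (Hrho : forall a, upclosed (rho a)).
  { intros a g g' [q [O [V S]]] Hg. exists q. split; auto. split; auto. eapply tsub_trans; eauto. }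
  assert (HX : sem prim eta rho (canon_rhs ds) x).
  { apply (Hval (S N)); [lia|auto|]. apply lhs_iff. intros c Hc.
    destruct (In_nth_error _ _ Hc) as [i Ei].
    assert (HiM : i < M) by (apply nth_error_Some; congruence).
    assert (Ec : nth i (c0 :: cs) c0 = c) by (apply nth_error_nth; auto).
    assert (Hlen : len i = length (snd c)) by (unfold len; rewrite Ec; auto).
    apply sem_clause. apply FL_intro with (f := F i) (gs := fun k => G (i,k)).
    - apply (sem_upclosed prim (Hcf c Hc)).
    - apply (delta prim (Hcf c Hc) Fin.F1). eapply sem1_up. apply (Hcf c Hc).
      apply (Hphi i c Ei). apply meet_glb. intros k. apply F_hs; auto.
    - intros k. apply hr_sub.
    - intros k Hk. split; [|split].
      + exists (i,k). split. unfold Occ; cbn [fst snd]; rewrite Hlen. idtac. split; [exact HiM|exact Hk]. split; [|apply tsub_refl].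
        unfold var; cbn [fst snd]. rewrite Ec. auto.
      + intros c'. apply hr_sub.
      + intros c'. apply FG_disj; auto. unfold Occ; cbn [fst snd]; rewrite Hlen; split; [exact HiM|exact Hk].
    - intros k k' Hkk c'. apply Gh_disj; auto. simpl. intros E; injection E; lia.
    - intros c' l Hl. destruct (F_cover B M len h hs i (comp M len c') l Hl) as [H|[k [Hk H]]]; auto.
      right. exists k. split; auto. rewrite Hlen in Hk; exact Hk. }
  apply rhs_iff in HX. destruct HX as [d [Hd HX]].
  destruct (In_nth_error _ _ Hd) as [j Ej].
  assert (Fd := Hdf d Hd).
  apply sem_clause in HX.
  destruct (snd d) as [|b bs] eqn:Ed.
  - right. exists d. split; auto. split; auto. simpl in HX.
    apply (delta prim Fd Fin.F1) in HX. eapply sem1_up; eauto.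
    exact (meet_sub Fin.F1 x Fin.F1).
  - left. set (lb := b :: bs) in *.
    apply FL_elim in HX. destruct HX as [f [gs [Hf [Sf [Hgs Hpd]]]]].
    assert (Hq : forall l, exists q, l < length lb -> Occ M len q /\ var q = nth l lb 0 /\ tsub (G q) (gs l)).
    { intros l. destruct (Nat.lt_ge_cases l (length lb)) as [Hl|Hl].
      - destruct (Hgs l Hl) as [[q [O [V S]]] _]. exists q. auto.
      - exists (0,0). intros; lia. }
    set (qf := fun l => proj1_sig (constructive_indefinite_description _ (Hq l))).
    assert (HQ : forall l, l < length lb -> Occ M len (qf l) /\ var (qf l) = nth l lb 0 /\ tsub (G (qf l)) (gs l)).
    { intros l Hl. unfold qf. destruct (constructive_indefinite_description _ (Hq l)) as [q Hq']. simpl. auto. }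
    assert (Clash : forall l l' c p v w, l < length lb -> l' < length lb ->
       hval (G (qf l) c) p = Some v -> hval (G (qf l') c) p = Some w -> l = l').
    { intros l l' c p v w Hl Hl' H1 H2.
      destruct (HQ l Hl) as [_ [_ S1]]. destruct (HQ l' Hl') as [_ [_ S2]].
      apply S1 in H1. apply S2 in H2.
      destruct (Nat.lt_total l l') as [Lt|[Eq|Gt]]; auto; exfalso.
      - destruct (Hpd l l' (conj Lt Hl') c p); congruence.
      - destruct (Hpd l' l (conj Gt Hl) c p); congruence. }
    assert (K1 : forall l l', l < length lb -> l' < length lb -> qf l = qf l' -> l = l').
    { intros l l' Hl Hl' E. destruct (HQ l Hl) as [O _].
      destruct (G_loc B M len h hs (qf l) (qf l) HB O O (or_introl eq_refl)) as [G1 _].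
      set (cq := Fin.of_nat_lt (HN _ O)).
      assert (Hc : comp M len cq = Some (qf l)) by apply comp_of, O.
      apply (Clash l l' cq (Loc B (qf l) (qf l)) 0%Z 0%Z); auto; unfold G; rewrite Hc.
      auto. rewrite <- E. auto. }
    assert (H0 : 0 < length lb) by (unfold lb; simpl; lia).
    destruct (HQ 0 H0) as [O0 [V0 S0]].
    set (i := fst (qf 0)).
    assert (K2 : forall l, l < length lb -> fst (qf l) = i).
    { intros l Hl. destruct (xm (fst (qf l) = i)) as [E|E]; auto. exfalso.
      destruct (HQ l Hl) as [Ol _].
      destruct (G_loc B M len h hs (qf 0) (qf l) HB O0 Ol (or_intror (fun e => E (eq_sym e)))) as [G1 G2].
      set (cq := Fin.of_nat_lt (HN _ O0)).
      assert (Hc : comp M len cq = Some (qf 0)) by apply comp_of, O0.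
      assert (0 = l).
      { apply (Clash 0 l cq (Loc B (qf 0) (qf l)) 0%Z 0%Z); auto; unfold G; rewrite Hc; auto. }
      subst l. apply E. reflexivity. }
    assert (HiM : i < M) by (destruct O0; auto).
    exists i, j, (nth i (c0 :: cs) c0), d.
    split. apply nth_error_nth'. exact HiM.
    split. exact Ej.
    split.
    + apply (delta prim Fd Fin.F1) in Hf. eapply sem1_up; eauto.
      intros l v Hv.
      assert (Hx0 : hval h l = Some v).
      { apply (Sf Fin.F1). exact (meet_sub Fin.F1 f Fin.F1 l Hv). }
      destruct (hval (hs i) l) eqn:Ehs.
      * rewrite (Hsub i HiM l z Ehs) in Hx0. auto.
      * exfalso. set (cq := Fin.of_nat_lt (HN _ O0)).
        assert (Hc : comp M len cq = Some (qf 0)) by apply comp_of, O0.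
        assert (Hg : hval (gs 0 cq) l = Some v).
        { apply S0. unfold G. rewrite Hc. apply G_h; auto. }
        assert (Hfc : hval (f cq) l = Some v) by exact (meet_sub Fin.F1 f cq l Hv).
        destruct (Hgs 0 H0) as [_ [_ D]]. destruct (D cq l); congruence.
    + intros c _. rewrite Ed. fold lb.
      apply (count_inj lb (snd (nth i (c0 :: cs) c0)) (fun l => snd (qf l))).
      * intros l Hl. destruct (HQ l Hl) as [[_ Ol] [Vl _]]. rewrite (K2 l Hl) in Ol.
        split. exact Ol. unfold var in Vl. rewrite (K2 l Hl) in Vl; auto.
      * intros l l' Hl Hl' E. apply K1; auto.
        destruct (qf l) as [a1 b1] eqn:E1. destruct (qf l') as [a2 b2] eqn:E2.
        pose proof (K2 l Hl) as F1. pose proof (K2 l' Hl') as F2.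
        rewrite E1 in F1. rewrite E2 in F2. simpl in *. congruence.
Qed.

Theorem mainTheorem10 (PA : Type) (prim : env -> PA -> Heap -> Prop) (eta : env)
  (c0 : clause PA) (cs : list (clause PA)) (ds : list (clause PA)) :
  canonical (c0 :: cs) ds ->
  (parametricity prim eta (c0 :: cs) ds <->
   forall n : nat, 1 <= n ->
     nvalid prim n eta (canon_lhs c0 cs) (canon_rhs ds)).
Proof.
  intros Hc. split.
  - apply dir1; auto.
  - apply dir2; auto.
Qed.
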